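(* The energy spectral density $S_\Omega(z)=\sum_{l=-\infty}^{\infty}r(l)z^{-l}$ of the channel uncertainty satisfies $$S_\Omega(z)=\frac12\sum_{i_1,i_2=0}^{\bar\tau}\big(\alpha_{i_1}z^{i_1}-\alpha_{i_2}z^{i_2}\big)\big(\alpha_{i_1}z^{-i_1}-\alpha_{i_2}z^{-i_2}\big)p_{i_1}p_{i_2}.$$
   Context: Fix an integer $\bar\tau\ge1$, let $\mathcal{D}=\{0,\dots,\bar\tau\}$, and fix real weights $\alpha_0,\dots,\alpha_{\bar\tau}$. Let $\{\tau_n\}$ be i.i.d. $\mathcal{D}$-valued random variables with $\Pr\{\tau_n=i\}=p_i$, where $\sum_ip_i=1$. Let $\delta$ be the Kronecker delta. Define $\omega(k,n)=\alpha_i[\delta(\tau_n-i)-p_i]$ if $k=n+i$ with $i\in\mathcal{D}$, and $\omega(k,n)=0$ otherwise. For a fixed index $n$, define the autocorrelation $$r(l)=\mathbb{E}\Big\{\sum_{k=-\infty}^{\infty}\omega(k,n)\omega(k+l,n)\Big\},\qquad l\in\mathbb{Z}.$$ It does not depend on $n$. *)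

(* Defs.v *)
From HB Require Import structures.
From mathcomp Require Import all_boot all_order all_algebra.
From mathcomp Require Import boolp classical_sets.
From mathcomp Require Import complex.
Set Implicit Arguments. Unset Strict Implicit. Unset Printing Implicit Defensive.
Import Order.TTheory GRing.Theory Num.Theory.
Local Open Scope ring_scope.

Definition symsum (V : nmodType) (f : int -> V) (N : nat) : V :=
  \sum_(0 <= j < (2 * N).+1) f (j%:Z - N%:Z).

(* Bilateral sum \sum_{k=-oo}^{oo} f k, defined as the eventual value of the
   symmetric partial sums (for finitely supported f, as used here, these are
   eventually constant and equal to the genuine sum; default 0 otherwise). *)
Definition bisum (V : nmodType) (f : int -> V) : V :=
  xget 0 [set s | exists N0 : nat, forall N : nat, (N0 <= N)%N -> symsum f N = s].

(* omega(k,n) = alpha_i [delta(tau_n - i) - p_i] if k = n + i with i in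
   D = {0,...,taubar}, and 0 otherwise; [tau] is the value of tau_n. *)
Definition omega (R : pzRingType) (taubar : nat) (alpha p : nat -> R)
    (tau : nat) (k n : int) : R :=
  let d := k - n in
  if (0 <= d) && (d <= taubar%:Z) then
    alpha `|d|%N * (((tau == `|d|%N) : nat)%:R - p `|d|%N)
  else 0.

(* Expectation of g(tau_n) where tau_n takes value i in D with probability p_i. *)
Definition expect (R : pzRingType) (taubar : nat) (p : nat -> R)
    (g : nat -> R) : R :=
  \sum_(0 <= i < taubar.+1) p i * g i.

Definition autocorr (R : pzRingType) (taubar : nat) (alpha p : nat -> R)
    (n l : int) : R :=
  expect taubar p
    (fun tau => bisum (fun k => omega taubar alpha p tau k n *
                                omega taubar alpha p tau (k + l) n)).

Definition esd (R : rcfType) (taubar : nat) (alpha p : nat -> R) (n : int)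
    (z : R[i]) : R[i] :=
  bisum (fun l => ((autocorr taubar alpha p n l)%:C)%C * z ^ (- l)).

(* Main.v *)
Require Import Defs.
From HB Require Import structures.
From mathcomp Require Import all_boot all_order all_algebra.
From mathcomp Require Import boolp classical_sets.
From mathcomp Require Import complex zify ring lra.
Set Implicit Arguments. Unset Strict Implicit. Unset Printing Implicit Defensive.
Import Order.TTheory GRing.Theory Num.Theory.
Local Open Scope ring_scope.

Lemma bisum_eq (V : nmodType) (f : int -> V) s N0 :
  (forall N, (N0 <= N)%N -> symsum f N = s) -> bisum f = s.
Proof.
move=> H; rewrite /bisum; apply: xget_unique; first by exists N0.
move=> y [N1 HN1]; rewrite -(HN1 (maxn N0 N1)) ?leq_maxr // H // leq_maxl //.
Qed.

Lemma symsum_delta (V : pzRingType) (c : int) (v : V) N :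
  (absz c <= N)%N -> symsum (fun k => (k == c)%:R * v) N = v.
Proof.
move=> hc; rewrite /symsum.
have hj : ((absz (c + N%:Z)%R) < (2 * N).+1)%N.
  lia.
rewrite (bigD1_seq (absz (c + N%:Z)%R)) ?mem_iota ?iota_uniq //=.
rewrite big1 ?addr0.
  have -> : ((absz (c + N%:Z)%R)%:Z - N%:Z == c) by apply/eqP; lia.
  by rewrite mul1r.
move=> j hj'; have -> : (j%:Z - N%:Z == c) = false; last by rewrite mul0r.
apply/negbTE; apply: contra hj' => /eqP <-. apply/eqP. lia.
Qed.

Lemma bisum_deltas (V : pzRingType) (I : finType) (c : I -> int) (v : I -> V) :
  bisum (fun k => \sum_(x : I) (k == c x)%:R * v x) = \sum_x v x.
Proof.
apply: (@bisum_eq _ _ _ (\max_x absz (c x))) => N HN.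
rewrite /symsum exchange_big /=; apply: eq_bigr => x _.
apply: symsum_delta; exact: leq_trans (leq_bigmax x) HN.
Qed.

Definition cc (R : pzRingType) (alpha p : nat -> R) (tau i : nat) : R :=
  alpha i * (((tau == i) : nat)%:R - p i).

Lemma omegaE (R : pzRingType) T (alpha p : nat -> R) tau k n :
  omega T alpha p tau k n = \sum_(i < T.+1) (k == n + (i : nat)%:Z)%:R * cc alpha p tau i.
Proof.
rewrite /omega /cc.
case: ifP => hd.
  have hi : (absz (k - n)%R < T.+1)%N by move/andP: hd => [h1 h2]; lia.
  rewrite (bigD1 (Ordinal hi)) //= big1 ?addr0.
    have -> : (k == n + (absz (k - n)%R)%:Z) by apply/eqP; move/andP: hd => [h1 h2]; lia.
    by rewrite mul1r.
  move=> j hj; have -> : (k == n + (j : nat)%:Z) = false; last by rewrite mul0r.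
  apply/negbTE; apply: contra hj => /eqP hk. apply/eqP; apply: val_inj => /=. lia.
rewrite big1 // => j _; have -> : (k == n + (j : nat)%:Z) = false; last by rewrite mul0r.
apply/negbTE/negP => /eqP hk; move: hd; have := ltn_ord j; rewrite hk. move=> hj.
have -> : (n + (j:nat)%:Z - n) = j by lia.
move/negbT/negP; apply; apply/andP; split; lia.
Qed.

Lemma autocorrE (R : comPzRingType) T (alpha p : nat -> R) n l :
  autocorr T alpha p n l = \sum_(x : 'I_T.+1 * 'I_T.+1)
     (l == (x.2 : nat)%:Z - (x.1 : nat)%:Z)%:R *
       expect T p (fun tau => cc alpha p tau x.1 * cc alpha p tau x.2).
Proof.
rewrite /autocorr.
have inner : forall tau, bisum (fun k => omega T alpha p tau k n * omega T alpha p tau (k + l) n)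
   = \sum_(x : 'I_T.+1 * 'I_T.+1) (l == (x.2 : nat)%:Z - (x.1 : nat)%:Z)%:R *
       (cc alpha p tau x.1 * cc alpha p tau x.2).
  move=> tau; rewrite -(bisum_deltas (fun x : 'I_T.+1 * 'I_T.+1 => n + (x.1 : nat)%:Z)).
  congr bisum; apply: funext => k.
  rewrite !omegaE mulr_suml; under eq_bigr do rewrite mulr_sumr.
  rewrite pair_bigA /=; apply: eq_bigr => -[i j] _ /=.
  case: (eqVneq k (n + (i:nat)%:Z)) => [->|hk]; last by rewrite !mul0r.
  rewrite !mul1r.
  have -> : (n + (i:nat)%:Z + l == n + (j:nat)%:Z) = (l == (j:nat)%:Z - (i:nat)%:Z).
    by apply/eqP/eqP; lia.
  by case: (l == _); rewrite ?mul1r ?mul0r ?mulr0 ?mulr1.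
rewrite /expect; under eq_bigr do rewrite inner mulr_sumr.
rewrite exchange_big /=; apply: eq_bigr => x _; rewrite mulr_sumr.
by apply: eq_bigr => tau _; rewrite mulrCA.
Qed.

Lemma esdE (R : rcfType) T (alpha p : nat -> R) n (z : R[i]) :
  esd T alpha p n z = \sum_(x : 'I_T.+1 * 'I_T.+1)
    ((expect T p (fun tau => cc alpha p tau x.1 * cc alpha p tau x.2))%:C)%C *
      z ^ (- ((x.2 : nat)%:Z - (x.1 : nat)%:Z)).
Proof.
rewrite /esd -(bisum_deltas (fun x : 'I_T.+1 * 'I_T.+1 => (x.2 : nat)%:Z - (x.1 : nat)%:Z)).
congr bisum; apply: funext => l.
rewrite autocorrE rmorph_sum mulr_suml; apply: eq_bigr => x _.
rewrite rmorphM rmorph_nat.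
by case: (eqVneq l _) => [->|_]; rewrite ?mul1r ?mul0r.
Qed.

Lemma sum_pdelta (R : pzRingType) T (p : nat -> R) i : (i < T.+1)%N ->
  \sum_(0 <= t < T.+1) p t * ((t == i) : nat)%:R = p i.
Proof.
move=> hi; rewrite (bigD1_seq i) ?mem_iota ?iota_uniq //= eqxx mulr1 big1 ?addr0 //.
by move=> t /negbTE ->; rewrite mulr0.
Qed.

Lemma expectE (R : comPzRingType) T (alpha p : nat -> R) (i j : nat) :
  (i < T.+1)%N -> (j < T.+1)%N -> \sum_(0 <= t < T.+1) p t = 1 ->
  expect T p (fun tau => cc alpha p tau i * cc alpha p tau j) =
    alpha i * alpha j * (((i == j) : nat)%:R * p i - p i * p j).
Proof.
move=> hi hj hP; rewrite /expect /cc.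
transitivity (\sum_(0 <= t < T.+1) alpha i * alpha j *
   (((i == j) : nat)%:R * (p t * ((t == i) : nat)%:R) - p i * (p t * ((t == j) : nat)%:R)
    - p j * (p t * ((t == i) : nat)%:R) + p i * p j * p t)).
  apply: eq_bigr => t _; case: (eqVneq t i) => [->|_] /=; ring.
rewrite -mulr_sumr; congr (_ * _).
rewrite big_split !sumrB /= -!mulr_sumr !sum_pdelta // hP; ring.
Qed.
Lemma delta_sum (F : pzRingType) m (i : 'I_m) (G : 'I_m -> F) :
  \sum_(j < m) ((i : nat) == j :> nat)%:R * G j = G i.
Proof.
rewrite (bigD1 i) //= eqxx mul1r big1 ?addr0 // => j hj.
have -> : ((i : nat) == j) = false by apply/negbTE; rewrite eq_sym.
by rewrite mul0r.
Qed.

Lemma final_alg (F : numFieldType) T (a P w v : nat -> F) :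
 (forall i, w i * v i = 1) -> \sum_(i < T.+1) P i = 1 ->
 \sum_(i < T.+1) \sum_(j < T.+1) a i * a j * ((i == j :> nat)%:R * P i - P i * P j) * (w i * v j)
 = 2^-1 * \sum_(i < T.+1) \sum_(j < T.+1)
     (a i * w i - a j * w j) * (a i * v i - a j * v j) * P i * P j.
Proof.
move=> hwv hP.
pose S2 := \sum_(i < T.+1) a i * a i * P i.
pose X := \sum_(i < T.+1) \sum_(j < T.+1) a i * a j * P i * P j * (w i * v j).
have L : \sum_(i < T.+1) \sum_(j < T.+1) a i * a j * ((i == j :> nat)%:R * P i - P i * P j) * (w i * v j) = S2 - X.
  rewrite /S2 /X -sumrB; apply: eq_bigr => i _.
  have -> : a i * a i * P i = a i * a i * P i * (w i * v i) by rewrite hwv mulr1.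
  rewrite -(delta_sum i (fun j : 'I_T.+1 => a i * a j * P i * (w i * v j))) -sumrB.
  by apply: eq_bigr => j _ /=; ring.
have E1 : \sum_(i < T.+1) \sum_(j < T.+1) a i * a i * P i * P j = S2.
  by apply: eq_bigr => i _; rewrite -mulr_sumr hP mulr1.
have E2 : \sum_(i < T.+1) \sum_(j < T.+1) a j * a j * P i * P j = S2.
  rewrite exchange_big /=; apply: eq_bigr => i _.
  by rewrite -[RHS]mulr1 -hP mulr_sumr; apply: eq_bigr => j _; ring.
have E3 : \sum_(i < T.+1) \sum_(j < T.+1) a j * a i * P j * P i * (w j * v i) = X.
  by rewrite exchange_big.
have R : \sum_(i < T.+1) \sum_(j < T.+1)
     (a i * w i - a j * w j) * (a i * v i - a j * v j) * P i * P j
   = (\sum_(i < T.+1) \sum_(j < T.+1) a i * a i * P i * P j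
     + \sum_(i < T.+1) \sum_(j < T.+1) a j * a j * P i * P j)
     - (X + \sum_(i < T.+1) \sum_(j < T.+1) a j * a i * P j * P i * (w j * v i)).
  rewrite /X -!big_split /= -sumrB; apply: eq_bigr => i _.
  rewrite -!big_split /= -sumrB; apply: eq_bigr => j _.
  have hi := hwv i; have hj := hwv j.
  rewrite -[a i * a i * P i * P j]mulr1 -hi -[a j * a j * P i * P j]mulr1 -hj; ring.
rewrite L R E1 E2 E3.
have h2 : (2 : F) != 0 by rewrite pnatr_eq0.
apply: (mulfI h2); rewrite mulrA mulfV // mul1r; ring.
Qed.

Theorem lemma3p2 (R : rcfType) (taubar : nat) (alpha p : nat -> R) (n : int)
    (z : R[i]) :
  (1 <= taubar)%N ->
  (forall i : nat, (i <= taubar)%N -> 0 <= p i) ->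
  \sum_(0 <= i < taubar.+1) p i = 1 ->
  z != 0 ->
  esd taubar alpha p n z =
    2^-1 * \sum_(0 <= i1 < taubar.+1) \sum_(0 <= i2 < taubar.+1)
      (((alpha i1)%:C)%C * z ^+ i1 - ((alpha i2)%:C)%C * z ^+ i2) *
      (((alpha i1)%:C)%C * z ^- i1 - ((alpha i2)%:C)%C * z ^- i2) *
      ((p i1)%:C)%C * ((p i2)%:C)%C.
Proof.
move=> hT hp hP hz.
rewrite esdE big_mkord [in RHS](eq_bigr _ (fun i _ => big_mkord _ _)).
have hwv : forall i, z ^+ i * z ^- i = 1 by move=> i; rewrite mulfV // expf_neq0.
have hPC : \sum_(i < taubar.+1) ((p i)%:C)%C = 1 :> R[i].
  by rewrite -rmorph_sum (big_mkord xpredT p) in hP *; rewrite hP rmorph1.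
rewrite -(@final_alg _ _ (fun i => ((alpha i)%:C)%C) (fun i => ((p i)%:C)%C)
          (fun i => z ^+ i) (fun i => z ^- i) hwv hPC).
rewrite -(pair_bigA _ (fun i j : 'I_taubar.+1 =>
    ((expect taubar p (fun tau => cc alpha p tau i * cc alpha p tau j))%:C)%C *
      z ^ (- ((j : nat)%:Z - (i : nat)%:Z)))).
apply: eq_bigr => i _; apply: eq_bigr => j _.
rewrite expectE // -?big_mkord //.
rewrite opprB expfzDr // -invr_expz.
rewrite !rmorphM rmorphB !rmorphM rmorph_nat.
reflexivity.
Qed.
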